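(* Let $M\ge 2$ be even, $T\ge 1$, $\mathcal{X}'=\{\pm1,\pm3,\ldots,\pm(M-1)\}$, $\mathcal{X}=\{x\in\mathbb{C}: \mathrm{Re}(x)\in\mathcal{X}',\ \mathrm{Im}(x)\in\mathcal{X}'\}$ (square $M^2$-QAM), and $\mathcal{C}=\mathcal{X}^T\subset\mathbb{C}^T$. Let $\mathbf{y}\in\mathbb{C}^T$, $\mathbf{y}\neq\mathbf 0$. Let $\mathbf{x}^{\mathrm{opt}}$ be any maximizer of $|\hat{\mathbf{x}}^\dagger\mathbf{y}|^2/\|\hat{\mathbf{x}}\|^2$ over $\hat{\mathbf{x}}\in\mathcal{C}$, let $h^{\mathrm{opt}}=(\mathbf{x}^{\mathrm{opt}})^\dagger\mathbf{y}/\|\mathbf{x}^{\mathrm{opt}}\|^2$ and $\lambda^{\mathrm{opt}}=1/h^{\mathrm{opt}}$. Then for all $t=1,\ldots,T$, $|\mathrm{Re}(\lambda^{\mathrm{opt}}y_t)|\le M+2T-2$ and $|\mathrm{Im}(\lambda^{\mathrm{opt}}y_t)|\le M+2T-2$.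
   Context: $(\cdot)^\dagger$ is the Hermitian transpose and $\|\cdot\|$ the Euclidean norm. This is noncoherent GLRT detection of $M^2$-ary square QAM codewords of length $T$ over a complex-valued block fading channel $\mathbf{y}=h\mathbf{x}+\mathbf{n}$; since $\mathbf{y}\neq\mathbf 0$ the maximum is positive so $h^{\mathrm{opt}}\neq 0$. *)

(* Defs.v *)
(* Complex numbers are modelled by an arbitrary
   numClosedFieldType C (algebraically closed field with conjugation,
   'Re, 'Im, norm); the field of complex numbers is the intended instance. *)
From HB Require Import structures.
From mathcomp Require Import all_boot all_order all_algebra.
Set Implicit Arguments. Unset Strict Implicit. Unset Printing Implicit Defensive.
Import Order.TTheory GRing.Theory Num.Theory.
Local Open Scope ring_scope.

Definition pam (C : numClosedFieldType) (M : nat) (a : C) : bool :=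
  [exists k : 'I_(M %/ 2), (a == (2 * k + 1)%N%:R) || (a == - (2 * k + 1)%N%:R)].

Definition qam (C : numClosedFieldType) (M : nat) (x : C) : bool :=
  pam M ('Re x) && pam M ('Im x).

Definition in_codebook (C : numClosedFieldType) (M T : nat) (x : 'I_T -> C) : Prop :=
  forall t, qam M (x t).

Definition hinner (C : numClosedFieldType) (T : nat) (x y : 'I_T -> C) : C :=
  \sum_(t < T) (x t)^* * y t.

Definition normsq (C : numClosedFieldType) (T : nat) (x : 'I_T -> C) : C :=
  \sum_(t < T) `|x t| ^+ 2.

Definition glrt_metric (C : numClosedFieldType) (T : nat) (x y : 'I_T -> C) : C :=
  `|hinner x y| ^+ 2 / normsq x.

(* Main.v *)
Require Import Defs.
From HB Require Import structures.
From mathcomp Require Import all_boot all_order all_algebra.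
From Stdlib Require Import Lia.
Import Order.TTheory GRing.Theory Num.Theory.
Local Open Scope ring_scope.
Set Implicit Arguments. Unset Strict Implicit. Unset Printing Implicit Defensive.


Section Pam.
Variable C : numClosedFieldType.
Variable M : nat.

Lemma pamP (a : C) : pam M a ->
  exists2 k : nat, (k < M %/ 2)%N & (a = (2*k+1)%:R \/ a = - (2*k+1)%:R).
Proof.
case/existsP=> k /orP[] /eqP ->; exists (nat_of_ord k) => //; by [left|right].
Qed.

Lemma pam_pos (k : nat) : (k < M %/ 2)%N -> pam M ((2*k+1)%:R : C).
Proof. by move=> hk; apply/existsP; exists (Ordinal hk); rewrite eqxx. Qed.

Lemma pam_neg (k : nat) : (k < M %/ 2)%N -> pam M (- (2*k+1)%:R : C).
Proof. by move=> hk; apply/existsP; exists (Ordinal hk); rewrite eqxx orbT. Qed.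

Lemma pamN (a : C) : pam M (- a) = pam M a.
Proof.
apply/idP/idP => /pamP [k hk [] ha].
- by move/eqP: ha; rewrite eqr_oppLR => /eqP ->; apply: pam_neg.
- by move/eqP: ha; rewrite eqr_opp => /eqP ->; apply: pam_pos.
- by rewrite ha; apply: pam_neg.
- by rewrite ha opprK; apply: pam_pos.
Qed.

Lemma pam_real (a : C) : pam M a -> a \is Num.real.
Proof. by case/pamP=> k _ [] ->; rewrite ?rpredN realn. Qed.

Lemma odd_bound k : (k < M %/ 2)%N -> (2 * k + 1 <= M - 1)%N.
Proof.
move=> hk.
have h1 : (2 * (M %/ 2) <= M)%N by rewrite mulnC leq_divM.
have h2 : (2 * k + 2 <= 2 * (M %/ 2))%N by rewrite -mulnSr leq_mul2l.
move/ssrnat.leP: h1 => h1; move/ssrnat.leP: h2 => h2; apply/ssrnat.leP.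
rewrite -?multE -?plusE -?minusE in h1 h2 *. lia.
Qed.

Lemma pam_bound (a : C) : pam M a -> `|a| <= (M - 1)%:R.
Proof.
case/pamP=> k hk [] ->; rewrite ?normrN normr_nat ler_nat; exact: odd_bound.
Qed.

Lemma pam_max : (2 <= M)%N -> ~~ odd M -> pam M ((M - 1)%N%:R : C).
Proof.
move=> h2 hev.
have hM : M = ((M %/ 2) * 2)%N.
  by rewrite divn2 -[LHS]odd_double_half (negbTE hev) add0n -muln2.
have hk : (M %/ 2 - 1 < M %/ 2)%N.
  move: h2; rewrite {1}hM => h2; apply/ssrnat.ltP; move/ssrnat.leP: h2.
  rewrite -?multE -?plusE -?minusE; lia.
have := pam_pos hk; congr (pam M (_%:R)).
move: hk h2; rewrite [X in (2 <= X)%N]hM [X in (_ = X - 1)%N]hM.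
move: (M %/ 2)%N => K hk h2.
apply/eqP; rewrite eqn_leq; apply/andP; split;
 apply/ssrnat.leP; move/ssrnat.leP: h2; rewrite -?multE -?plusE -?minusE; lia.
Qed.

Lemma pam_min : (2 <= M)%N -> ~~ odd M -> pam M (- (M - 1)%N%:R : C).
Proof. by move=> h2 hev; rewrite pamN pam_max. Qed.
End Pam.


Section Near.
Variable C : numClosedFieldType.
Variable M : nat.
Definition nearest (r a : C) := forall b, pam M b -> (r - a) ^+ 2 <= (r - b) ^+ 2.

Lemma L1pos (k : nat) (r a : C) : (k < M %/ 2)%N -> r \is Num.real ->
  a = (2 * k + 1)%N%:R -> nearest r a -> - (M - 1)%N%:R <= a * (r - a).
Proof.
move=> hk hr ea H.
have hb : pam M (a - 2).
  rewrite ea; case: k hk {ea} => [|k'] hk.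
    have -> : (2 * 0 + 1)%N%:R - 2 = - (2 * 0 + 1)%N%:R :> C.
      by rewrite /= -[2%:R]/(1 + 1 : C) opprD addrA subrr sub0r.
    exact: pam_neg.
  have -> : (2 * k'.+1 + 1)%N%:R - 2 = (2 * k' + 1)%N%:R :> C.
    by rewrite mulnS -addnA addnC natrD addrK.
  apply: pam_pos; exact: ltnW.
set d := r - a.
have := H _ hb; have -> : r - (a - 2) = d + 2 by rewrite /d opprB addrCA addrC.
rewrite -/d; move=> hH; clearbody d; move: hH; rewrite [(d + 2) ^+ 2]sqrrD -addrA lerDl.
have -> : d * 2 *+ 2 + 2 ^+ 2 = (d + 1) * 4%:R.
  rewrite mulrDl mul1r; congr (_ + _); first by rewrite -mulrnAr -mulrnA.
  by rewrite expr2 -natrM.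
rewrite pmulr_lge0 ?ltr0n // => hd.
have ha : 0 <= a by rewrite ea ler0n.
have h1 : - a <= a * d.
  by rewrite -subr_ge0 opprK -{2}[a]mulr1 -mulrDr mulr_ge0.
apply: le_trans h1; rewrite lerN2 ea ler_nat; exact: odd_bound.
Qed.

Lemma L1 (r a : C) : pam M a -> r \is Num.real -> nearest r a ->
  - (M - 1)%N%:R <= a * (r - a).
Proof.
move=> /pamP [k hk [] ea] hr H; first exact: (L1pos hk hr ea).
have hr' : - r \is Num.real by rewrite rpredN.
have := @L1pos k (- r) (- a) hk hr'.
rewrite -opprD mulrNN; apply; first by rewrite ea opprK.
move=> b hb.
have := H (- b); rewrite pamN => /(_ hb).
have e1 : - r - - a = - (r - a) by rewrite opprD.
have e2 : - r - b = - (r - - b) by rewrite opprD opprK.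
by rewrite e1 e2 !sqrrN.
Qed.
Lemma L2pos (r a n : C) : (2 <= M)%N -> ~~ odd M -> pam M a -> r \is Num.real ->
  nearest r a -> 0 <= n -> n + (M - 1)%N%:R < r -> n * (M - 1)%N%:R < a * (r - a).
Proof.
move=> h2 hev ha hr H hn hnr; set m : C := (M - 1)%N%:R in hnr *.
have hm : pam M m := pam_max C h2 hev.
have hsq := H _ hm.
have am : a <= m := real_ler_normlW (pam_real ha) (pam_bound ha).
have mr : m < r by apply: le_lt_trans hnr; rewrite addrC lerDl.
have h1 : 0 <= r - m by rewrite subr_ge0 ltW.
have h0 : r - m <= r - a by rewrite lerD2l lerN2.
have h3 : 0 <= r - a := le_trans h1 h0.
move: hsq; rewrite ler_sqr ?nnegrE // lerD2l lerN2 => ma.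
have -> : a = m by apply/le_anti; rewrite am ma.
have m0 : 0 < m by rewrite ltr0n subn_gt0.
by rewrite [n * m]mulrC ltr_pM2l // ltrBrDr.
Qed.

Lemma L2 (r a n : C) : (2 <= M)%N -> ~~ odd M -> pam M a -> r \is Num.real ->
  nearest r a -> 0 <= n -> n + (M - 1)%N%:R < `|r| -> n * (M - 1)%N%:R < a * (r - a).
Proof.
move=> h2 hev ha hr H hn; rewrite real_ltr_normr // => /orP[]; first exact: L2pos.
move=> hlt.
have hr' : - r \is Num.real by rewrite rpredN.
have := @L2pos (- r) (- a) n h2 hev; rewrite pamN -opprD mulrNN; apply => //.
move=> b hb.
have := H (- b); rewrite pamN => /(_ hb).
have e1 : - r - - a = - (r - a) by rewrite opprD.
have e2 : - r - b = - (r - - b) by rewrite opprD opprK.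
by rewrite e1 e2 !sqrrN.
Qed.
End Near.


Lemma core (C : numClosedFieldType) T (s : 'I_T) (m n : C) (g1 g2 : 'I_T -> C) :
  0 <= m -> (forall t, - m <= g1 t) -> (forall t, - m <= g2 t) ->
  n * m < g1 s -> n + 1 = (T.*2)%:R -> \sum_t (g1 t + g2 t) = 0 -> False.
Proof.
move=> hm h1 h2 hs hn hsum.
have hge t : 0 <= g1 t + g2 t + m *+ 2.
  by have := lerD (h1 t) (h2 t); rewrite -opprD -subr_ge0 opprK mulr2n.
have E : \sum_t (g1 t + g2 t + m *+ 2) = m *+ 2 *+ T.
  by rewrite big_split /= hsum add0r sumr_const card_ord.
have lower : g1 s + g2 s + m *+ 2 <= \sum_t (g1 t + g2 t + m *+ 2).
  by rewrite (bigD1 s) //= lerDl sumr_ge0.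
have strict : m *+ 2 *+ T < g1 s + g2 s + m *+ 2.
  have -> : m *+ 2 *+ T = n * m + (- m + m *+ 2).
    rewrite -mulrnA mulr2n addKr -mulr_natr mul2n -hn mulrDr mulr1 [n * m]mulrC //.
  by rewrite addrA ltr_leD // ltr_leD.
by move: (lt_le_trans strict lower); rewrite E ltxx.
Qed.


Section Cx.
Variable C : numClosedFieldType.

Lemma id4 (a b c d : C) : (a - b) ^+ 2 + (c - d) ^+ 2 =
  a ^+ 2 + c ^+ 2 - (b * a + d * c) *+ 2 + (b ^+ 2 + d ^+ 2).
Proof.
rewrite [in RHS]mulrnDl [in RHS]opprD !sqrrB [b * a]mulrC [d * c]mulrC.
by rewrite addrACA; congr (_ + _); rewrite addrACA.
Qed.

Lemma dist_expand (z w : C) :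
  `|z - w| ^+ 2 = `|z| ^+ 2 - 'Re (w^* * z) *+ 2 + `|w| ^+ 2.
Proof.
rewrite !normC2_Re_Im !raddfB /= ReM Re_conj Im_conj mulNr opprK id4 //.
Qed.

Lemma pam_neq0 M (a : C) : pam M a -> a != 0.
Proof. by case/pamP=> k _ [] ->; rewrite ?oppr_eq0 pnatr_eq0 addn1. Qed.

Lemma normsq_gt0 M T (x : 'I_T -> C) (t : 'I_T) : in_codebook M x -> 0 < normsq x.
Proof.
move=> hx; have : x t != 0.
  apply/negP => /eqP h; have := hx t; rewrite /qam h raddf0 => /andP [/pam_neq0].
  by rewrite eqxx.
move=> hxt; rewrite /normsq (bigD1 t) //=.
rewrite -[X in X < _]addr0 ltr_leD // ?exprn_gt0 ?normr_gt0 //.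
by apply: sumr_ge0 => u _; rewrite exprn_ge0.
Qed.
End Cx.


Section D.
Variable C : numClosedFieldType.
Variable T : nat.

Definition Dist (z w : 'I_T -> C) := \sum_t `|z t - w t| ^+ 2.

Lemma D_expand (lam : C) (y w : 'I_T -> C) :
  Dist (fun t => lam * y t) w =
  (\sum_t `|lam * y t| ^+ 2) - 'Re (lam * hinner w y) *+ 2 + normsq w.
Proof.
rewrite /Dist /normsq /hinner (eq_bigr _ (fun t _ => dist_expand _ _)).
rewrite !big_split /= sumrN sumrMnl -raddf_sum mulr_sumr.
by congr (_ - 'Re _ *+ 2 + _); apply: eq_bigr => i _; rewrite mulrCA.
Qed.

Lemma agm (a b u : C) : 0 <= a -> 0 <= b -> 0 <= u -> u ^+ 2 <= a * b ->
  u *+ 2 <= a + b.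
Proof.
move=> ha hb hu h.
rewrite -ler_sqr ?nnegrE ?mulrn_wge0 ?addr_ge0 //.
rewrite exprMn_n; apply: le_trans (ler_wMn2r _ h) _.
exact: (real_leif_AGM2_scaled (ger0_real ha) (ger0_real hb)).1.
Qed.

Lemma optimal (y x x' : 'I_T -> C) :
  0 < normsq x -> 0 < normsq x' -> hinner x y != 0 ->
  glrt_metric x' y <= glrt_metric x y ->
  Dist (fun t => (normsq x / hinner x y) * y t) x <=
  Dist (fun t => (normsq x / hinner x y) * y t) x'.
Proof.
set N := normsq x; set N' := normsq x'; set p := hinner x y; set q := hinner x' y.
move=> hN hN' hp hmet.
rewrite !D_expand -/p -/q -/N -/N' divfK //.
have -> : 'Re N = N by apply/Creal_ReP; exact: gtr0_real.
rewrite -!addrA lerD2l mulr2n opprD addrNK addrC lerBrDr addrC lerBlDr.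
set u := `|N / p * q|.
apply: le_trans (ler_wMn2r 2 (leif_Re_Creal _).1) _; rewrite -/u.
apply: agm; [exact: ltW|exact: ltW|exact: normr_ge0|].
move: hmet; rewrite /glrt_metric -/p -/q -/N -/N' ler_pdivrMr // => hmet.
rewrite /u normrM exprMn; apply: le_trans (ler_wpM2l _ hmet) _.
  by rewrite exprn_ge0.
rewrite normf_div (ger0_norm (ltW hN)) expr_div_n mulrA.
rewrite [_ / `|p| ^+ 2 * (_ / N)]mulrA divfK; last by rewrite expf_neq0 // normr_eq0.
by rewrite expr2 mulfK ?gt_eqF // mulrC.
Qed.
End D.


Section Co.
Variable C : numClosedFieldType.
Variables M T : nat.

Lemma D_split (z x x' : 'I_T -> C) (s : 'I_T) :
  (forall u, u != s -> x' u = x u) ->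
  Dist z x <= Dist z x' -> `|z s - x s| ^+ 2 <= `|z s - x' s| ^+ 2.
Proof.
move=> hne; rewrite /Dist (bigD1 s) //= [X in _ <= X](bigD1 s) //=.
rewrite (eq_bigr (fun u => `|z u - x' u| ^+ 2)) ?lerD2r // => u hu.
by rewrite hne.
Qed.

Lemma coord_near (z x : 'I_T -> C) (s : 'I_T) :
  in_codebook M x ->
  (forall x', in_codebook M x' -> Dist z x <= Dist z x') ->
  nearest M ('Re (z s)) ('Re (x s)) /\ nearest M ('Im (z s)) ('Im (x s)).
Proof.
move=> hx H; have /andP [hRe hIm] := hx s; split => b hb.
- pose x' u := if u == s then b + 'i * 'Im (x s) else x u.
  have hx' : in_codebook M x'.
    move=> u; rewrite /x'; case: eqP => [_|_]; last exact: hx.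
    by rewrite /qam Re_rect ?Im_rect ?(pam_real hb) // hb.
  have hne : forall u, u != s -> x' u = x u by move=> u hu; rewrite /x' (negbTE hu).
  have := D_split hne (H _ hx').
  rewrite /x' eqxx !normC2_Re_Im !raddfB /= Re_rect ?Im_rect ?(pam_real hb) //.
  by rewrite lerD2r.
- pose x' u := if u == s then 'Re (x s) + 'i * b else x u.
  have hx' : in_codebook M x'.
    move=> u; rewrite /x'; case: eqP => [_|_]; last exact: hx.
    by rewrite /qam Re_rect ?Im_rect ?(pam_real hb) // hb hRe.
  have hne : forall u, u != s -> x' u = x u by move=> u hu; rewrite /x' (negbTE hu).
  have := D_split hne (H _ hx').
  rewrite /x' eqxx !normC2_Re_Im !raddfB /= Re_rect ?Im_rect ?(pam_real hb) //.
  by rewrite lerD2l.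
Qed.
End Co.

Unset Implicit Arguments.
Set Strict Implicit.


Theorem theorem2 (C : numClosedFieldType) (M T : nat)
  (hM2 : (2 <= M)%N) (hMeven : ~~ odd M) (hT : (1 <= T)%N)
  (y : 'I_T -> C) (hy : exists t, y t != 0)
  (xopt : 'I_T -> C) (hxopt : in_codebook M xopt)
  (hmax : forall xh : 'I_T -> C, in_codebook M xh ->
            glrt_metric xh y <= glrt_metric xopt y) :
  let hopt := hinner xopt y / normsq xopt in
  let lopt := hopt^-1 in
  forall t : 'I_T,
    `|'Re (lopt * y t)| <= (M + 2 * T - 2)%N%:R /\
    `|'Im (lopt * y t)| <= (M + 2 * T - 2)%N%:R.
Proof.
move=> hopt lopt t; rewrite /lopt /hopt.
set N := normsq xopt; set p := hinner xopt y.
have [hp|hp] := eqVneq p 0.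
  by rewrite hp mul0r invr0 mul0r !raddf0 normr0 ler0n.
rewrite invf_div.
pose z u := N / p * y u.
have hN : 0 < N := normsq_gt0 t hxopt.
have hopt' : forall x', in_codebook M x' -> Dist z xopt <= Dist z x'.
  move=> x' hx'; exact: (optimal hN (normsq_gt0 t hx') hp (hmax _ hx')).
pose R u := 'Re (z u); pose I u := 'Im (z u).
pose a u := 'Re (xopt u); pose c u := 'Im (xopt u).
have hsum : \sum_u (a u * (R u - a u) + c u * (I u - c u)) = 0.
  have e0 : \sum_u (xopt u)^* * (z u - xopt u) = 0.
    rewrite (eq_bigr (fun u => (xopt u)^* * z u - (xopt u)^* * xopt u)); last first.
      by move=> u _; rewrite mulrBr.
    rewrite sumrB (eq_bigr (fun u => N / p * ((xopt u)^* * y u))); last first.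
      by move=> u _; rewrite /z mulrCA.
    rewrite -mulr_sumr -/(hinner xopt y) -/p divfK //.
    rewrite (eq_bigr (fun u => `|xopt u| ^+ 2)) ?subrr // => u _.
    by rewrite normCKC.
  transitivity ('Re (\sum_u (xopt u)^* * (z u - xopt u))); last by rewrite e0 raddf0.
  rewrite raddf_sum; apply: eq_bigr => u _.
  by rewrite /= ReM Re_conj Im_conj mulNr opprK !raddfB.
have hnear u := @coord_near C M T z xopt u hxopt hopt'.
set m : C := (M - 1)%N%:R.
set n : C := (2 * T - 1)%N%:R.
have hK : (M + 2 * T - 2)%N%:R = n + m :> C.
  rewrite -natrD; congr (_%:R); apply/eqP; rewrite eqn_leq; apply/andP; split;
  apply/ssrnat.leP; move/ssrnat.leP: hM2; move/ssrnat.leP: hT;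
  rewrite -?multE -?plusE -?minusE; lia.
have hn1 : n + 1 = (T.*2)%:R :> C.
  rewrite natr1; congr (_%:R); rewrite -mul2n; apply/eqP; rewrite eqn_leq; apply/andP; split;
  apply/ssrnat.leP; move/ssrnat.leP: hT; rewrite -?multE -?plusE -?minusE; lia.
have hm0 : 0 <= m by rewrite ler0n.
have hn0 : 0 <= n by rewrite ler0n.
have hpa u : pam M (a u) by case/andP: (hxopt u).
have hpc u : pam M (c u) by case/andP: (hxopt u).
have g1lb u : - m <= a u * (R u - a u).
  by apply: (L1 (hpa u)); [exact: Creal_Re | case: (hnear u)].
have g2lb u : - m <= c u * (I u - c u).
  by apply: (L1 (hpc u)); [exact: Creal_Im | case: (hnear u)].
rewrite hK; split; rewrite real_leNgt ?normr_real ?rpredD ?realn //; apply/negP => hlt.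
- apply: (core (s := t) hm0 g1lb g2lb _ hn1 hsum).
  apply: (L2 hM2 hMeven (hpa t) (Creal_Re _) _ hn0 hlt); by case: (hnear t).
- apply: (core (s := t) hm0 g2lb g1lb _ hn1).
    apply: (L2 hM2 hMeven (hpc t) (Creal_Im _) _ hn0 hlt); by case: (hnear t).
  by rewrite -[X in _ = X]hsum; apply: eq_bigr => u _; rewrite addrC.
Qed.
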